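(* For every integer $n\ge 1$, the relation $\preceq_{\mathsf{MWC}}$ is a partial order on $\mathcal{G}_{\mathsf{cwvg}}(n)$, and the poset $(\mathcal{G}_{\mathsf{cwvg}}(n),\preceq_{\mathsf{MWC}})$ is graded with rank function $\rho:\mathcal{G}_{\mathsf{cwvg}}(n)\to\mathbb{N}$, $\rho(G)=|W_{\min,G}|$, where $W_{\min,G}$ is the set of minimal winning coalitions of $G$. Moreover, this poset has a least element, and its rank is $0$.
   Context: Let $N=\{1,\dots,n\}$. A simple game on $N$ is a function $v:2^N\to\{0,1\}$ (the game in which every coalition is losing is allowed); coalitions $S$ with $v(S)=1$ are winning, the others losing. A minimal winning coalition is a winning coalition $S$ such that $S\setminus\{i\}$ is losing for every $i\in S$. A simple game is a weighted voting game if there are $q\ge 0$ and $w_1,\dots,w_n\ge 0$ with $v(S)=1\iff\sum_{i\in S}w_i\ge q$ for all $S\subseteq N$; $[q;w_1,\dots,w_n]$ is then a weighted representation. For players $i,j$, write $i\succeq j$ if $v(S\cup\{i\})\ge v(S\cup\{j\})$ for all $S\subseteq N\setminus\{i,j\}$. A canonical weighted voting game on $N$ is a weighted voting game with $1\succeq 2\succeq\cdots\succeq n$; $\mathcal{G}_{\mathsf{cwvg}}(n)$ denotes the set of these. For $G,G'\in\mathcal{G}_{\mathsf{cwvg}}(n)$, $G\preceq_{\mathsf{MWC}}G'$ holds iff there is a sequence $G=G_1,\dots,G_k=G'$ ($k\ge1$) of games in $\mathcal{G}_{\mathsf{cwvg}}(n)$ such that for each $1\le i<k$, $W_{\min,G_i}\subset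 W_{\min,G_{i+1}}$ and $|W_{\min,G_{i+1}}|=|W_{\min,G_i}|+1$. A poset $(S,\preceq)$ is graded with rank function $\rho:S\to\mathbb{N}$ if (i) $\rho$ is constant on the minimal elements, (ii) $x\preceq y$ implies $\rho(x)\le\rho(y)$, and (iii) whenever $y$ covers $x$ (i.e., $x\preceq y$, $x\ne y$, and there is no $z\notin\{x,y\}$ with $x\preceq z\preceq y$) we have $\rho(y)=\rho(x)+1$. *)

(* Defs.v *)
From HB Require Import structures.
From mathcomp Require Import all_boot all_order all_algebra.
From mathcomp Require Import reals.
From Stdlib Require Import Relations.
Set Implicit Arguments. Unset Strict Implicit. Unset Printing Implicit Defensive.
Import Order.TTheory GRing.Theory Num.Theory.

(* A simple game on N = {0,...,n-1} (player k+1 of the paper is 'I_n element k):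
   a Boolean function on coalitions; true = winning. *)
Definition game (n : nat) := {ffun {set 'I_n} -> bool}.

Definition min_winning n (v : game n) (S : {set 'I_n}) : bool :=
  v S && [forall i in S, ~~ v (S :\ i)].

Definition Wmin n (v : game n) : {set {set 'I_n}} := [set S | min_winning v S].

Definition rho n (v : game n) : nat := #|Wmin v|.

Definition weighted (R : realType) n (v : game n) : Prop :=
  exists (q : R) (w : 'I_n -> R),
    (0 <= q)%R /\ (forall i, (0 <= w i)%R) /\
    (forall S : {set 'I_n}, v S = (q <= \sum_(i in S) w i)%R).

Definition desir n (v : game n) (i j : 'I_n) : Prop :=
  forall S : {set 'I_n}, i \notin S -> j \notin S ->
    (v (j |: S) ==> v (i |: S)).

Definition cwvg (R : realType) n (v : game n) : Prop :=
  weighted R v /\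
  (forall i j : 'I_n, nat_of_ord j = (nat_of_ord i).+1 -> desir v i j).

Definition mwc_step (R : realType) n (G G' : game n) : Prop :=
  cwvg R G /\ cwvg R G' /\ Wmin G \subset Wmin G' /\ #|Wmin G'| = (#|Wmin G|).+1.

Definition mwc_le (R : realType) n : relation (game n) :=
  clos_refl_trans_1n (game n) (@mwc_step R n).

Definition covers (R : realType) n (x y : game n) : Prop :=
  mwc_le R x y /\ x <> y /\
  ~ (exists z, cwvg R z /\ z <> x /\ z <> y /\ mwc_le R x z /\ mwc_le R z y).

Definition is_minimal (R : realType) n (x : game n) : Prop :=
  cwvg R x /\ forall y, cwvg R y -> mwc_le R y x -> y = x.

(* Main.v *)
Require Import Defs.
From HB Require Import structures.
From mathcomp Require Import all_boot all_order all_algebra.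
From mathcomp Require Import reals.
From mathcomp Require Import ring lra zify.
From Stdlib Require Import Relations.
Set Implicit Arguments. Unset Strict Implicit. Unset Printing Implicit Defensive.
Import Order.TTheory GRing.Theory Num.Theory.

Open Scope ring_scope.

Definition rep (R : realType) n (v : game n) (q : R) (w : 'I_n -> R) : Prop :=
  (0 <= q) /\ (forall i, 0 <= w i) /\ (forall S : {set 'I_n}, v S = (q <= \sum_(i in S) w i)).

Definition sortw (R : realType) n (w : 'I_n -> R) : Prop :=
  forall i j : 'I_n, nat_of_ord j = (nat_of_ord i).+1 -> w j <= w i.

Lemma sum_sub (R : realType) n (w : 'I_n -> R) (S T : {set 'I_n}) :
  (forall i, 0 <= w i) -> S \subset T -> \sum_(i in S) w i <= \sum_(i in T) w i.
Proof.
move=> w0 sST; rewrite [X in _ <= X](big_setID S) /= (setIidPr sST) lerDl.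
by apply: sumr_ge0 => i _.
Qed.

Lemma rep_mono (R : realType) n (v : game n) q (w : 'I_n -> R) (S T : {set 'I_n}) :
  rep v q w -> S \subset T -> v S -> v T.
Proof.
move=> [q0 [w0 hv]] sST; rewrite !hv => h; apply: le_trans h _; exact: sum_sub.
Qed.

Lemma exists_mwc n (v : game n) S : v S -> exists2 M, M \in Wmin v & M \subset S.
Proof.
move=> vS.
have P0 : (fun M : {set 'I_n} => v M && (M \subset S)) S by rewrite /= vS subxx.
case: (@arg_minnP _ S (fun M : {set 'I_n} => v M && (M \subset S)) (fun M : {set 'I_n} => #|M|) P0) => M /andP [vM sMS] minM.
exists M => //; rewrite inE /min_winning vM /=.
apply/forallP => i; apply/implyP => iM; apply/negP => vMi.
have := minM (M :\ i); rewrite vMi /= (subset_trans (subD1set M i) sMS) => /(_ isT).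
by rewrite (cardsD1 i M) iM /= add1n ltnn.
Qed.

Lemma wmin_win n (v : game n) M : M \in Wmin v -> v M.
Proof. by rewrite inE => /andP []. Qed.

Lemma wmin_min n (v : game n) M i : M \in Wmin v -> i \in M -> v (M :\ i) = false.
Proof. by rewrite inE => /andP [_ /forallP /(_ i) /implyP h] /h /negbTE. Qed.

Lemma sorted_cwvg (R : realType) n (v : game n) q (w : 'I_n -> R) :
  rep v q w -> sortw w -> cwvg R v.
Proof.
move=> [q0 [w0 hv]] sw; split; first by exists q, w.
move=> i j eji S iS jS; rewrite !hv !big_setU1 //=; apply/implyP => h.
apply: le_trans h _; rewrite lerD2r; exact: sw.
Qed.

Lemma sortw_glob (R : realType) n (w : 'I_n -> R) :
  sortw w -> forall i j : 'I_n, (i <= j)%N -> w j <= w i.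
Proof.
move=> sw i j; move eqd : (j - i)%N => d; elim: d j eqd => [|d ih] j eqd lij.
  by have -> : j = i by apply/val_inj/eqP; rewrite eqn_leq lij /= -subn_eq0 eqd.
have jn : (j.-1 < n)%N by apply: leq_ltn_trans (leq_pred j) (ltn_ord j).
apply: le_trans (ih (Ordinal jn) _ _); first by apply: sw => /=; lia.
  by rewrite /=; lia.
by rewrite /=; lia.
Qed.

Lemma pos_min (R : realType) (T : finType) (F : T -> R) :
  (forall x, 0 < F x) -> exists e, 0 < e /\ forall x, e <= F x.
Proof.
move=> Fp.
suff [e [e0 he]] : exists e, 0 < e /\ forall x, x \in enum T -> e <= F x.
  by exists e; split=> // x; apply: he; rewrite mem_enum.
elim: (enum T) => [|a s [e [e0 he]]]; first by exists 1; split=> //; exact: ltr01.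
exists (Num.min e (F a)); split; first by rewrite lt_min e0 Fp.
move=> x; rewrite inE => /orP [/eqP ->|xs]; first by rewrite ge_min lexx orbT.
by rewrite ge_min he.
Qed.

Lemma lex_lemma (R : realType) (T : finType) (f g : T -> R) (e1 : R) :
  0 < e1 -> exists e, 0 < e /\ e <= e1 /\
    forall x, (0 < f x + e * g x) = ((0 < f x) || ((f x == 0) && (0 < g x))).
Proof.
move=> e10.
pose F x := if f x == 0 then 1 else `|f x| / (1 + `|g x|).
have Fp : forall x, 0 < F x.
  move=> x; rewrite /F; case: eqP => fx; first exact: ltr01.
  apply: divr_gt0; first by rewrite normr_gt0; apply/eqP.
  by apply: (@lt_le_trans _ _ 1); [exact: ltr01| rewrite lerDl].
case: (pos_min Fp) => e0 [e00 he0].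
exists (Num.min e0 e1); split; first by rewrite lt_min e00 e10.
split; first by rewrite ge_min lexx orbT.
move=> x; set e := Num.min e0 e1.
have e0' : 0 < e by rewrite lt_min e00 e10.
case: (eqVneq (f x) 0) => fx.
  by rewrite fx add0r pmulr_rgt0 //= ltxx.
have hF := he0 x; rewrite /F (negbTE fx) in hF.
have hee : e <= e0 by rewrite ge_min lexx.
have g1 : 0 < 1 + `|g x| by apply: (@lt_le_trans _ _ 1); [exact: ltr01| rewrite lerDl].
have h1 : e * (1 + `|g x|) <= `|f x|.
  by rewrite -ler_pdivlMr //; apply: le_trans hee hF.
have h2 : `|e * g x| < `|f x|.
  rewrite normrM (gtr0_norm e0'); apply: lt_le_trans h1.
  by rewrite mulrDr mulr1 ltrDr.
have h3 := ler_norm (e * g x).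
have h4 : - `|e * g x| <= e * g x by rewrite lerNl -normrN ler_norm.
case: (ltrgtP 0 (f x)) => sf.
- rewrite (gtr0_norm sf) in h2; rewrite orbC /=; apply/idP; lra.
- rewrite (ltr0_norm sf) in h2; rewrite /=.
  apply/negbTE; rewrite -leNgt; lra.
- by move: fx; rewrite sf eqxx.
Qed.

Lemma thresh (R : realType) n (u : 'I_n -> R) (t : R) :
  (forall i, 0 <= u i) -> exists q, 0 <= q /\
    forall T : {set 'I_n}, (t < \sum_(i in T) u i) = (q <= \sum_(i in T) u i).
Proof.
move=> u0.
case: (pickP (fun T : {set 'I_n} => t < \sum_(i in T) u i)) => [T0 P0|none].
  case: (@arg_minP _ R _ T0 (fun T : {set 'I_n} => t < \sum_(i in T) u i)
          (fun T => \sum_(i in T) u i) P0) => Tm Pm minm.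
  exists (\sum_(i in Tm) u i); split; first by apply: sumr_ge0.
  move=> T; apply/idP/idP => [/minm //|h]; exact: lt_le_trans Pm h.
exists (\sum_(i in [set: 'I_n]) u i + 1); split.
  by apply: addr_ge0; [apply: sumr_ge0| exact: ler01].
move=> T; rewrite none; apply/esym/negbTE; rewrite -ltNge.
apply: le_lt_trans (sum_sub u0 (subsetT T)) _; rewrite ltrDl; exact: ltr01.
Qed.

Lemma upclose_wmin (R : realType) n (v v' : game n) q (w : 'I_n -> R) (A : {set {set 'I_n}}) :
  rep v q w -> A \subset Wmin v ->
  (forall T, v' T = [exists M, (M \in A) && (M \subset T)]) -> Wmin v' = A.
Proof.
move=> hr sA hv'; apply/setP => M; rewrite inE /min_winning hv'.
apply/idP/idP.
- case/andP => /existsP [M' /andP [M'A sM'M]] /forallP hm.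
  case: (eqVneq M' M) => [<- //|ne].
  have [i iM iM'] : exists2 i, i \in M & i \notin M'.
    apply/exists_inP; rewrite -negb_forall_in; apply/negP => /forall_inP h.
    by move/negP: ne; apply; rewrite eqEsubset sM'M; apply/subsetP => x /h.
  have := hm i; rewrite iM /= hv' => /existsP []; exists M'; rewrite M'A /=.
  by apply/subsetP => x xM'; rewrite !inE (subsetP sM'M x xM') andbT; apply: contraNneq iM' => <-.
- move=> MA; apply/andP; split; first by apply/existsP; exists M; rewrite MA subxx.
  apply/forallP => i; apply/implyP => iM; rewrite hv'; apply/negP => /existsP [M' /andP [M'A sM']].
  have MW := subsetP sA M MA; have M'W := subsetP sA M' M'A.
  have := wmin_min MW iM; rewrite (rep_mono hr sM' (wmin_win M'W)) //.
Qed.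

Ltac ordneq := match goal with H : is_true (negb (@eq_op _ ?x ?y)) |- _ =>
   let H' := fresh "hne" in
   assert (H' : nat_of_ord x <> nat_of_ord y) by (move=> ?; move/eqP: H; apply; apply: val_inj; assumption);
   clear H end.

Definition swp n (i j x : 'I_n) : 'I_n := if x == i then j else if x == j then i else x.

Lemma swpK n (i j : 'I_n) : involutive (swp i j).
Proof.
move=> x; rewrite /swp; case: (eqVneq x i) => [->|xi].
  by case: (eqVneq j i) => [->//|ji]; rewrite eqxx.
case: (eqVneq x j) => [->|xj]; first by rewrite eqxx.
by rewrite (negbTE xi) (negbTE xj).
Qed.

Lemma swp_other n (i j x : 'I_n) : x != i -> x != j -> swp i j x = x.
Proof. by move=> /negbTE xi /negbTE xj; rewrite /swp xi xj. Qed.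

Definition inv (R : realType) n (w : 'I_n -> R) :=
  #|[set p : 'I_n * 'I_n | ((p.1 < p.2)%N && (w p.1 < w p.2))]|.

Lemma swap_inv (R : realType) n (w : 'I_n -> R) (i j : 'I_n) :
  nat_of_ord j = (nat_of_ord i).+1 -> w i < w j -> (inv (w \o swp i j) < inv w)%N.
Proof.
move=> eji wij; rewrite /inv.
set A' := [set p : 'I_n * 'I_n | _ ]; set A := [set p : 'I_n * 'I_n | _].
pose f (p : 'I_n * 'I_n) := (swp i j p.1, swp i j p.2).
have finj : injective f.
  by move=> [a b] [c d] /= [] /(can_inj (swpK i j)) -> /(can_inj (swpK i j)) ->.
rewrite -(card_imset A' finj); apply: proper_card; apply/properP; split.
  apply/subsetP => _ /imsetP [[a b] /[!inE] /= /andP [ab wab] ->].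
  rewrite /f /= wab andbT.
  have ij : i != j by apply/eqP => e; move: eji; rewrite e; lia.
  rewrite /swp; case: (eqVneq a i) => [ai|ai]; case: (eqVneq b i) => [bi|bi];
    case: (eqVneq a j) => [aj|aj]; case: (eqVneq b j) => [bj|bj];
    subst => //=; rewrite ?eqxx /= in wab ab *; try lia.
  - by move: wab; rewrite /swp eqxx (negbTE bi) eqxx => /(lt_trans wij); rewrite ltxx.
  - clear wab wij finj f A A'; repeat ordneq; lia.
  - clear wab wij finj f A A'; repeat ordneq; lia.
exists (i, j); first by rewrite inE /= eji ltnSn wij.
apply/imsetP => [[[a b] /[!inE] /= /andP [ab _] [e1 e2]]].
have ea : a = j by rewrite -(swpK i j a) -e1 /swp eqxx.
have eb : b = i.
  rewrite -(swpK i j b) -e2 /swp; case: (eqVneq j i) => [->//|_]; by rewrite eqxx.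
by move: ab; rewrite ea eb eji ltnNge leqnSn.
Qed.

Lemma swap_rep (R : realType) n (v : game n) q (w : 'I_n -> R) (i j : 'I_n) :
  rep v q w -> desir v i j -> nat_of_ord j = (nat_of_ord i).+1 -> w i < w j ->
  rep v q (w \o swp i j).
Proof.
move=> [q0 [w0 hv]] hd eji wij; split=> //; split; first by move=> x; exact: w0.
have ij : i != j by apply/eqP => e; move: eji; rewrite e; lia.
have key : forall Rr : {set 'I_n}, i \notin Rr -> j \notin Rr -> v (i |: Rr) = v (j |: Rr).
  move=> Rr iR jR; apply/idP/idP; last exact: (implyP (hd Rr iR jR)).
  rewrite !hv !big_setU1 //= => h; apply: le_trans h _; rewrite lerD2r; exact: ltW.
have sw_i : swp i j i = j by rewrite /swp eqxx.
have sw_j : swp i j j = i by rewrite /swp eq_sym (negbTE ij) eqxx.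
have fo : forall (S : {set 'I_n}), i \notin S -> j \notin S ->
    \sum_(x in S) (w \o swp i j) x = \sum_(x in S) w x.
  move=> S iS jS; apply: eq_bigr => x xS /=; rewrite swp_other //.
    by apply: contraNneq iS => <-.
  by apply: contraNneq jS => <-.
move=> S; case iS: (i \in S); case jS: (j \in S).
- have jS' : j \in S :\ i by rewrite !inE jS andbT eq_sym.
  have iS2 : i \notin S :\ i :\ j by rewrite !inE eqxx andbF.
  have jS2 : j \notin S :\ i :\ j by rewrite !inE eqxx.
  rewrite hv (big_setD1 i iS) (big_setD1 j jS').
  rewrite [\sum_(x in S) (w \o _) x](big_setD1 i iS) [\sum_(x in S :\ i) (w \o _) x](big_setD1 j jS') /=.
  rewrite sw_i sw_j fo //.
  by rewrite !addrA (addrC (w i)).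
- rewrite -(setD1K iS) key ?inE ?eqxx ?jS ?andbF //.
  rewrite hv !big_setU1 ?inE ?eqxx ?jS ?andbF //= fo ?inE ?eqxx ?jS ?andbF //.
  by rewrite sw_i.
- rewrite -(setD1K jS) -key ?inE ?eqxx ?iS ?andbF //.
  rewrite hv !big_setU1 ?inE ?eqxx ?iS ?andbF ?ij //= fo ?inE ?eqxx ?iS ?andbF //.
  by rewrite sw_j.
- by rewrite hv fo ?iS ?jS.
Qed.

Lemma cwvg_sorted (R : realType) n (v : game n) :
  cwvg R v -> exists q (w : 'I_n -> R), rep v q w /\ sortw w.
Proof.
move=> [[q [w [q0 [w0 hv]]]] hd].
have hr : rep v q w by [].
have : (inv w <= inv w)%N by [].
move: {2}(inv w) => m.
elim: m w {w0 hv} hr => [|m ih] w hr lm;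
  case sb: [forall i : 'I_n, forall j : 'I_n, (nat_of_ord j == (nat_of_ord i).+1) ==> (w j <= w i)].
- exists q, w; split=> // i j e; move/forallP: sb => /(_ i) /forallP /(_ j).
  by rewrite e eqxx.
- move/negbT: sb; rewrite negb_forall => /existsP [i]; rewrite negb_forall => /existsP [j].
  rewrite negb_imply -ltNge => /andP [/eqP e lt].
  by have := swap_inv e lt; rewrite leqn0 in lm; rewrite (eqP lm) ltn0.
- exists q, w; split=> // i j e; move/forallP: sb => /(_ i) /forallP /(_ j).
  by rewrite e eqxx.
- move/negbT: sb; rewrite negb_forall => /existsP [i]; rewrite negb_forall => /existsP [j].
  rewrite negb_imply -ltNge => /andP [/eqP e lt].
  apply: (ih (w \o swp i j) (swap_rep hr (hd i j e) e lt)).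
  by rewrite -ltnS; apply: leq_trans (swap_inv e lt) lm.
Qed.

Close Scope ring_scope.

Lemma bin_inj n (b b' : 'I_n -> bool) :
  (\sum_(i < n) b i * 2 ^ i = \sum_(i < n) b' i * 2 ^ i)%N -> b =1 b'.
Proof.
elim: n b b' => [|n ih] b b' h i; first by case: i.
move: h; rewrite !big_ord_recl !expn0 !muln1.
have e : forall c : 'I_n.+1 -> bool,
    (\sum_(i < n) c (lift ord0 i) * 2 ^ (bump 0 i) = 2 * \sum_(i < n) c (lift ord0 i) * 2 ^ i)%N.
  move=> c; rewrite big_distrr /=; apply: eq_bigr => j _.
  by rewrite /bump /= add1n expnS mulnCA.
rewrite !e => h.
have h0 : b ord0 = b' ord0.
  by move: h; case: (b ord0); case: (b' ord0) => //= h; exfalso; lia.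
have h1 : (\sum_(i < n) b (lift ord0 i) * 2 ^ i = \sum_(i < n) b' (lift ord0 i) * 2 ^ i)%N.
  by move: h; rewrite h0; lia.
case: (unliftP ord0 i) => [j ->|->] //.
exact: (ih (fun j => b (lift ord0 j)) (fun j => b' (lift ord0 j)) h1 j).
Qed.

Lemma set_bin_inj n (A B : {set 'I_n}) :
  (\sum_(i in A) 2 ^ (n - i) = \sum_(i in B) 2 ^ (n - i))%N -> A = B.
Proof.
have e : forall C : {set 'I_n}, (\sum_(i in C) 2 ^ (n - i) =
   2 * \sum_(j < n) (rev_ord j \in C) * 2 ^ j)%N.
  move=> C; rewrite big_mkcond /= (reindex_inj rev_ord_inj) /= big_distrr /=.
  apply: eq_bigr => j _; case: (rev_ord j \in C) => /=; last by rewrite muln0.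
  rewrite mul1n /= -expnS; congr (2 ^ _); have := ltn_ord j; lia.
rewrite !e => /eqP; rewrite eqn_pmul2l // => /eqP /bin_inj h.
apply/setP => i; have := h (rev_ord i); by rewrite rev_ordK.
Qed.

Open Scope ring_scope.

Definition G0 n : game n := [ffun _ => false].

Lemma G0_cwvg (R : realType) n : cwvg R (G0 n).
Proof.
split; last by move=> i j _ S _ _; rewrite !ffunE.
exists 1%R, (fun _ => 0%R); split; first exact: ler01.
split; first by move=> _; exact: lexx.
by move=> S; rewrite ffunE big1 // ler10.
Qed.

Lemma G0_Wmin n : Wmin (G0 n) = set0.
Proof. by apply/setP => M; rewrite !inE /min_winning ffunE. Qed.

Lemma zero_beyond (R : realType) n (G : game n) q (w : 'I_n -> R) (k : 'I_n) :
  rep G q w -> sortw w ->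
  (forall M i, M \in Wmin G -> i \in M -> (nat_of_ord i <= k)%N) ->
  rep G q (fun i => if (nat_of_ord i <= k)%N then w i else 0) /\
  sortw (fun i => if (nat_of_ord i <= k)%N then w i else 0).
Proof.
move=> hr sw mk; have [q0 [w0 hv]] := hr; split; last first.
  move=> i j e /=; case: ifP => jk; case: ifP => ik; try exact: sw.
  - by exfalso; move: ik jk; rewrite e; lia.
  - exact: w0.
  - exact: lexx.
split=> //; split; first by move=> i; case: ifP => // _; exact: lexx.
move=> T; set T' := [set i in T | (nat_of_ord i <= k)%N].
have -> : \sum_(i in T) (if (nat_of_ord i <= k)%N then w i else 0) = \sum_(i in T') w i.
  rewrite big_mkcond /= [in RHS]big_mkcond /=; apply: eq_bigr => i _; rewrite inE.
  by case: (i \in T) => //=; case: ifP.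
rewrite -hv; apply/idP/idP => h.
- have [M MW sMT] := exists_mwc h; apply: (rep_mono hr _ (wmin_win MW)).
  by apply/subsetP => i iM; rewrite inE (subsetP sMT i iM) (mk M i MW iM).
- by apply: (rep_mono hr _ h); apply/subsetP => i; rewrite inE => /andP [].
Qed.

Lemma core (R : realType) n (G : game n) q (w : 'I_n -> R) (k : 'I_n) (S0 : {set 'I_n}) :
  rep G q w -> sortw w -> (forall i : 'I_n, (k < i)%N -> w i = 0) ->
  S0 \in Wmin G -> k \in S0 ->
  (forall M i, M \in Wmin G -> i \in M -> (nat_of_ord i <= k)%N) ->
  exists G', cwvg R G' /\ Wmin G' \subset Wmin G /\ #|Wmin G| = (#|Wmin G'|).+1.
Proof.
move=> hr sw wz S0W kS0 mk.
have [q0 [w0 hv]] := hr.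
have glob := sortw_glob sw.
pose sm (T : {set 'I_n}) := \sum_(i in T) w i.
have smD1 : forall (T : {set 'I_n}) (i : 'I_n), i \in T -> sm T = w i + sm (T :\ i).
  by move=> T i iT; rewrite /sm (big_setD1 i iT).
have sm_ge0 : forall T : {set 'I_n}, 0 <= sm T by move=> T; apply: sumr_ge0.
have sm_sub : forall T T' : {set 'I_n}, T \subset T' -> sm T <= sm T' by move=> T T' s; exact: sum_sub w0 s.
have wpos : forall (M : {set 'I_n}) (i : 'I_n), M \in Wmin G -> i \in M -> 0 < w i.
  move=> M i MW iM; rewrite lt_neqAle w0 andbT; apply/negP => /eqP wi0.
  have := wmin_min MW iM; rewrite hv -/(sm _) -[X in _ <= X]add0r wi0 -smD1 // -hv.
  by rewrite (wmin_win MW).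
pose cand (M : {set 'I_n}) := (M \in Wmin G) && (k \in M).
have cS0 : cand S0 by rewrite /cand S0W kS0.
case: (@arg_minP _ R _ S0 cand sm cS0) => S1 cS1 minS1.
pose m := sm S1.
have msmall : forall M : {set 'I_n}, cand M -> m <= sm M by move=> M /minS1.
pose cn (i : 'I_n) : nat := (2 ^ (n - i))%N.
pose K : R := (\sum_(i : 'I_n) cn i)%:R + 1.
have K0 : 0 < K by rewrite /K ltr_wpDl // ltr01.
pose c (i : 'I_n) : R := if i == k then - K else
  if ((i < k)%N && (0 < w i)) then (cn i)%:R else 0.
pose Cs (T : {set 'I_n}) := \sum_(i in T) c i.
pose tied (M : {set 'I_n}) := cand M && (sm M == m).
have tS1 : tied S1 by rewrite /tied cS1 eqxx.
case: (@arg_minP _ R _ S1 tied Cs tS1) => S /andP [/andP [SW kS] /eqP smS] minS.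
have Sq : q <= m by rewrite -smS -hv (wmin_win SW).
have SkL : sm (S :\ k) < q by rewrite ltNge -hv (wmin_min SW kS).
have smSk := smD1 S k kS.
pose d := m - q.
have d0 : 0 <= d by rewrite subr_ge0.
have wkd : 0 < w k - d by rewrite /d -smS smSk; clear -SkL; lra.
pose wt (i : 'I_n) := if i == k then w k - d else w i.
have swt : forall T : {set 'I_n}, \sum_(i in T) wt i = sm T - (if k \in T then d else 0).
  move=> T; case: ifP => kT.
    have e : \sum_(i in T :\ k) wt i = sm (T :\ k).
      by apply: eq_bigr => i; rewrite !inE /wt => /andP [/negbTE -> _].
    rewrite (big_setD1 k kT) e (smD1 T k kT) /wt eqxx /=; exact: addrAC.
  rewrite subr0; apply: eq_bigr => i iT; rewrite /wt; case: eqP => // e.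
  by move: kT; rewrite -e iT.
have c_ge0 : forall i, i != k -> 0 <= c i.
  by move=> i /negbTE ik; rewrite /c ik; case: ifP => _ //; exact: ler0n.
have c_le : forall i, i != k -> c i <= (cn i)%:R.
  by move=> i /negbTE ik; rewrite /c ik; case: ifP => _ //; exact: ler0n.
have c0 : forall i, i != k -> w i = 0 -> c i = 0.
  by move=> i /negbTE ik wi; rewrite /c ik wi ltxx andbF.
have Cs_ge0 : forall T : {set 'I_n}, k \notin T -> 0 <= Cs T.
  move=> T kT; apply: sumr_ge0 => i iT; apply: c_ge0.
  by apply: contraNneq kT => <-.
have Cs_split : forall T : {set 'I_n}, k \in T -> Cs T = - K + Cs (T :\ k).
  by move=> T kT; rewrite /Cs (big_setD1 k kT) /c eqxx.
have Cs_le : forall T : {set 'I_n}, Cs (T :\ k) <= K - 1.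
  move=> T; rewrite /K addrK natr_sum.
  apply: le_trans (_ : \sum_(i in T :\ k) (cn i)%:R <= _).
    apply: ler_sum => i; rewrite !inE => /andP [ik _]; exact: c_le.
  have := @sum_sub R n (fun i => (cn i)%:R) (T :\ k) [set: 'I_n] (fun i => ler0n _ _) (subsetT _).
  suff -> : \sum_(i in [set: 'I_n]) (cn i)%:R = \sum_i (cn i)%:R :> R by [].
  by apply: eq_bigl => i; rewrite inE.
have CsS : Cs S < 0 by rewrite (Cs_split S kS); have := Cs_le S; lra.
have Cs_M : forall M : {set 'I_n}, M \in Wmin G -> k \in M ->
    Cs M = - K + (\sum_(i in M :\ k) cn i)%:R.
  move=> M MW kM; rewrite (Cs_split M kM) natr_sum; congr (_ + _).
  apply: eq_bigr => i; rewrite !inE => /andP [ik iM].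
  have lik : (i < k)%N by rewrite ltn_neqAle (mk M i MW iM) andbT; move: ik; apply: contra => /eqP e; apply/eqP/val_inj.
  by rewrite /c (negbTE ik) lik (wpos M i MW iM).
have inj : forall M M' : {set 'I_n}, M \in Wmin G -> k \in M -> M' \in Wmin G -> k \in M' ->
    Cs M = Cs M' -> M = M'.
  move=> M M' MW kM M'W kM'; rewrite (Cs_M M MW kM) (Cs_M M' M'W kM') => /addrI /eqP.
  rewrite eqr_nat => /eqP /set_bin_inj e.
  by rewrite -(setD1K kM) -(setD1K kM') e.
have zero_ext : forall M T : {set 'I_n}, M \subset T -> k \in M -> sm T = sm M -> Cs T = Cs M.
  move=> M T sMT kM e.
  have e2 : sm (T :\: M) = 0.
    by move: e; rewrite /sm (big_setID M) /= (setIidPr sMT); lra.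
  rewrite /Cs (big_setID M) /= (setIidPr sMT) [X in _ + X]big1 ?addr0 // => i iTM.
  apply: c0; first by move: iTM; rewrite !inE; apply: contraTneq => ->; rewrite kM.
  exact: (psumr_eq0P (fun j _ => w0 j) e2).
have noMk : forall M T : {set 'I_n}, M \in Wmin G -> M \subset T -> k \in T -> sm T <= m -> k \in M.
  move=> M T MW sMT kT smT; apply/negPn/negP => kM.
  have sMTk : M \subset T :\ k.
    by apply/subsetP => i iM; rewrite !inE (subsetP sMT i iM) andbT; apply: contraNneq kM => <-.
  have := sm_sub _ _ sMTk; rewrite (smD1 T k kT) in smT.
  have : q <= sm M by rewrite -hv (wmin_win MW).
  rewrite -smS smSk in smT; clear -smT SkL; lra.
pose e1 := (w k - d) / K.
have e1p : 0 < e1 by rewrite /e1 divr_gt0.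
have [eps [eps0 [epse1 hlex]]] := @lex_lemma R _
   (fun T : {set 'I_n} => \sum_(i in T) wt i - q) (fun T : {set 'I_n} => Cs T - Cs S) e1 e1p.
pose w2 (i : 'I_n) := wt i + eps * c i.
have sw2 : forall T : {set 'I_n}, \sum_(i in T) w2 i = \sum_(i in T) wt i + eps * Cs T.
  by move=> T; rewrite big_split /= -mulr_sumr.
have epsK : eps * K <= w k - d.
  by rewrite -ler_pdivlMr //; exact: epse1.
have w2_0 : forall i, 0 <= w2 i.
  move=> i; rewrite /w2 /wt; case: (eqVneq i k) => [->|ik].
    rewrite /c !eqxx mulrN; clear -epsK; lra.
  apply: addr_ge0; first exact: w0.
  by apply: mulr_ge0; [exact: ltW | exact: c_ge0].
have [q2 [q20 hq2]] := @thresh R n w2 (q + eps * Cs S) w2_0.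
pose G' : game n := [ffun T : {set 'I_n} => q2 <= \sum_(i in T) w2 i].
have repG' : rep G' q2 w2.
  split; first exact: q20. split; first exact: w2_0.
  by move=> T; rewrite /G' ffunE.
have sortw2 : sortw w2.
  move=> i j eji.
  have ij : i != k -> (i < k)%N -> wt i = w i by move=> /negbTE ik _; rewrite /wt ik.
  have ci0 : i != k -> 0 <= c i by exact: c_ge0.
  case: (ltngtP j k) => [jk|kj|/val_inj jk].
  - have ik : i != k by apply/eqP => e; move: jk; rewrite -e eji ltnNge leqnSn.
    have jk' : j != k by apply/eqP => e; move: jk; rewrite e ltnn.
    have lik : (i < k)%N by move: jk; rewrite eji; apply: ltnW.
    rewrite /w2 /wt (negbTE ik) (negbTE jk'); apply: lerD; first exact: sw.
    apply: ler_wpM2l; first exact: ltW.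
    rewrite /c (negbTE ik) (negbTE jk') jk lik /=.
    case: ifP => wj; last by case: ifP => _ //; exact: ler0n.
    have wi : 0 < w i by apply: lt_le_trans wj (sw i j eji).
    rewrite wi ler_nat leq_exp2l //; move: eji; clear; lia.
  - have jk' : j != k by apply/eqP => e; move: kj; rewrite e ltnn.
    have -> : w2 j = 0.
      rewrite /w2 /wt (negbTE jk') (wz j kj) /c (negbTE jk') ltnNge (ltnW kj) /= mulr0.
      exact: addr0.
    exact: w2_0.
  - have ik : i != k by apply/eqP => e; move: eji; rewrite jk e => /n_Sn.
    subst j; have h := sw i k eji.
    rewrite /w2 /wt eqxx (negbTE ik) /c eqxx mulrN.
    have : 0 <= eps * c i by apply: mulr_ge0; [exact: ltW| exact: c_ge0].
    have : 0 <= eps * K by apply: mulr_ge0; exact: ltW.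
    move: h d0; clear; set a := eps * K; set b := eps * _; lra.
have fg : forall T : {set 'I_n}, G' T = ((0 < \sum_(i in T) wt i - q) ||
    ((\sum_(i in T) wt i - q == 0) && (0 < Cs T - Cs S))).
  move=> T; rewrite -hlex /G' ffunE -hq2 sw2 -subr_gt0; congr (0 < _); ring.
pose E (T : {set 'I_n}) := [exists M, (M \in Wmin G :\ S) && (M \subset T)].
have Eintro : forall T M : {set 'I_n}, M \in Wmin G -> M != S -> M \subset T -> E T.
  by move=> T M MW MS sMT; apply/existsP; exists M; rewrite in_setD1 MW MS sMT.
have Eelim : forall T : {set 'I_n}, E T -> exists M, [/\ M \in Wmin G, M != S & M \subset T].
  by move=> T /existsP [M]; rewrite in_setD1 => /andP [/andP [MS MW] sMT]; exists M.
have key : forall T : {set 'I_n}, G' T = E T.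
  move=> T; rewrite fg swt; case kT: (k \in T).
  - have ef : sm T - d - q = sm T - m by rewrite /d; ring.
    rewrite ef; case: (ltrgtP (sm T) m) => h.
    + have -> : (0 < sm T - m) = false by apply/negbTE; rewrite -leNgt; clear -h; lra.
      have -> : (sm T - m == 0) = false by apply/negbTE/eqP; clear -h; lra.
      apply/esym/negbTE/negP => /Eelim [M [MW MS sMT]].
      have kM := noMk M T MW sMT kT (ltW h).
      have := msmall M (ltac:(by rewrite /cand MW kM)); have := sm_sub _ _ sMT.
      clear -h; lra.
    + have -> : (0 < sm T - m) = true by apply/idP; clear -h; lra.
      apply/esym; rewrite orTb.
      have GT : G T by rewrite hv -/(sm T); clear -h Sq; lra.
      have [M MW sMT] := exists_mwc GT.
      case: (eqVneq M S) => [eMS|MS]; last exact: Eintro MW MS sMT.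
      subst M.
      have hpos : 0 < sm (T :\: S).
        by move: h; rewrite /sm (big_setID S) /= (setIidPr sMT) -/(sm S) smS; clear; lra.
      have [i iTS wi] : exists2 i, i \in T :\: S & 0 < w i.
        case: (boolP [exists i in T :\: S, 0 < w i]) => [/exists_inP [i ? ?]|none]; first by exists i.
        exfalso; rewrite negb_exists_in in none; move/forall_inP: none => hall.
        move: hpos; rewrite /sm big1 ?ltxx // => i /hall; rewrite lt_neqAle w0 andbT negbK.
        by move/eqP.
      move: iTS; rewrite inE => /andP [iS iT].
      have ik : i != k by apply: contraNneq iS => ->.
      have lik : (i <= k)%N by rewrite leqNgt; apply/negP => /wz wi0; move: wi; rewrite wi0 ltxx.
      have wki := glob i k lik.
      pose T' := i |: (S :\ k).
      have iSk : i \notin S :\ k by rewrite inE negb_and iS orbT.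
      have GT' : G T'.
        rewrite hv -/(sm T') /sm big_setU1 //= -/(sm (S :\ k)).
        rewrite -smS smSk in Sq; clear -Sq wki; lra.
      have [M' M'W sM'T'] := exists_mwc GT'.
      have kT' : k \notin T' by rewrite !inE eqxx /= orbF eq_sym.
      have kM' : k \notin M' by apply: contraNN kT'; apply: (subsetP sM'T').
      apply: (Eintro T M' M'W).
        by apply: contraNneq kM' => ->.
      apply/subsetP => x; move/(subsetP sM'T'); rewrite !inE => /orP [/eqP -> //|/andP [_ xS]].
      exact: (subsetP sMT).
    + rewrite h subrr ltxx eqxx /=.
      apply/idP/idP.
      * move=> hc.
        have GT : G T by rewrite hv -/(sm T) h.
        have [M MW sMT] := exists_mwc GT.
        case: (eqVneq M S) => [eMS|MS]; last exact: Eintro MW MS sMT.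
        subst M; have := zero_ext S T sMT kS (ltac:(by rewrite h smS)).
        by move=> e; move: hc; rewrite e subrr ltxx.
      * move=> /Eelim [M [MW MS sMT]].
        have kM := noMk M T MW sMT kT (ltac:(by rewrite h)).
        have cM : cand M by rewrite /cand MW kM.
        have smM : sm M = m.
          by apply/eqP; rewrite eq_le (msmall M cM) andbT -h; exact: sm_sub.
        have tM : tied M by rewrite /tied cM smM eqxx.
        have CSM := minS M tM.
        have eT := zero_ext M T sMT kM (ltac:(by rewrite h smM)).
        rewrite eT subr_gt0 lt_neqAle CSM andbT.
        by apply/eqP => e; move/eqP: MS; apply; apply: inj => //.
  - rewrite subr0.
    have gp : 0 < Cs T - Cs S.
      by rewrite subr_gt0; apply: lt_le_trans CsS _; apply: Cs_ge0; rewrite kT.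
    rewrite gp andbT; apply/idP/idP.
    + move=> hq.
      have GT : G T by rewrite hv -/(sm T); move: hq => /orP [|/eqP]; clear; lra.
      have [M MW sMT] := exists_mwc GT.
      apply: (Eintro T M MW _ sMT); apply/eqP => eMS.
      by move: (subsetP sMT k); rewrite eMS kS kT => /(_ isT).
    + move=> /Eelim [M [MW MS sMT]].
      have := rep_mono hr sMT (wmin_win MW); rewrite hv -/(sm T) => hq.
      case: (ltrgtP (sm T) q) => hh.
      * by move: hq; rewrite leNgt hh.
      * by rewrite subr_gt0 hh.
      * by rewrite hh subrr eqxx orbT.
exists G'; split; first exact: sorted_cwvg repG' sortw2.
have WG' : Wmin G' = Wmin G :\ S := upclose_wmin hr (subD1set _ _) key.
by rewrite WG' subD1set (cardsD1 S (Wmin G)) SW.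
Qed.

Lemma descent (R : realType) n (G : game n) : cwvg R G -> (0 < rho G)%N ->
  exists G', cwvg R G' /\ Wmin G' \subset Wmin G /\ #|Wmin G| = (#|Wmin G'|).+1.
Proof.
move=> cG rp.
have [q [w [hr sw]]] := cwvg_sorted cG.
have [M0 M0W] : exists M0, M0 \in Wmin G by apply/set0Pn; rewrite -card_gt0.
case: (boolP (set0 \in Wmin G)) => [s0W|s0W].
  have eW : Wmin G = [set set0].
    apply/setP => M; rewrite in_set1; apply/idP/idP => [MW|/eqP -> //].
    apply/negPn/negP => /set0Pn [i iM].
    have := wmin_min MW iM; rewrite (rep_mono hr (sub0set _) (wmin_win s0W)) //.
  exists (G0 n); split; first exact: G0_cwvg.
  by rewrite G0_Wmin sub0set eW cards1 cards0.
have [i0 i0M0] : exists i0, i0 \in M0.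
  apply/set0Pn; apply: contraNneq s0W => <-; exact: M0W.
pose P (p : {set 'I_n} * 'I_n) := (p.1 \in Wmin G) && (p.2 \in p.1).
have P0 : P (M0, i0) by rewrite /P /= M0W i0M0.
case: (@arg_maxnP _ (M0, i0) P (fun p => nat_of_ord p.2) P0) => [[S0 k]] /andP [/= S0W kS0] maxk.
have mk : forall M i, M \in Wmin G -> i \in M -> (nat_of_ord i <= k)%N.
  by move=> M i MW iM; apply: (maxk (M, i)); rewrite /P /= MW iM.
have [hr' sw'] := zero_beyond hr sw mk.
apply: (core hr' sw' _ S0W kS0 mk) => i ki.
by rewrite leqNgt ki.
Qed.

Close Scope ring_scope.

Lemma G0_rho n : rho (G0 n) = 0%N.
Proof. by rewrite /rho G0_Wmin cards0. Qed.

Lemma rho0 (R : realType) n (G : game n) : cwvg R G -> rho G = 0%N -> G = G0 n.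
Proof.
move=> _ h; apply/ffunP => S; rewrite ffunE; apply/negbTE/negP => vS.
case: (exists_mwc vS) => M MW _.
by move: h; rewrite /rho (cardsD1 M) MW.
Qed.

Lemma step_rho (R : realType) n (G H : game n) : mwc_step R G H -> rho H = (rho G).+1.
Proof. by case=> _ [_ [_ h]]; rewrite /rho h. Qed.

Lemma le_rho (R : realType) n (G H : game n) : mwc_le R G H -> G = H \/ (rho G < rho H)%N.
Proof.
elim=> [x|x y z sxy _ [<-|ih]]; [by left| right; by rewrite (step_rho sxy) |].
right; rewrite (step_rho sxy) in ih; exact: ltn_trans (ltnSn _) ih.
Qed.

Lemma le_trans_mwc (R : realType) n (G H K : game n) :
  mwc_le R G H -> mwc_le R H K -> mwc_le R G K.
Proof.
move=> h1 h2; apply: clos_rt_rt1n; exact: rt_trans (clos_rt1n_rt _ _ _ _ h1) (clos_rt1n_rt _ _ _ _ h2).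
Qed.

Lemma least (R : realType) n (G : game n) : cwvg R G -> mwc_le R (G0 n) G.
Proof.
move eqm : (rho G) => m; elim: m G eqm => [|m ih] G eqm cG.
  by rewrite (rho0 cG eqm); exact: Relation_Operators.rt1n_refl.
have [G' [cG' [sub card]]] := descent cG (ltac:(by rewrite eqm)).
have e : rho G' = m by apply/eq_add_S; rewrite -eqm /rho card.
have h1 := ih G' e cG'.
apply: le_trans_mwc h1 _; apply: (@Relation_Operators.rt1n_trans _ _ G' G G); last exact: Relation_Operators.rt1n_refl.
by split.
Qed.

Theorem theorem6 (R : realType) (n : nat) : (1 <= n)%N ->
  (* partial order on G_cwvg(n) *)
  ((forall G : game n, cwvg R G -> mwc_le R G G) /\
   (forall G H : game n, cwvg R G -> cwvg R H ->
      mwc_le R G H -> mwc_le R H G -> G = H) /\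
   (forall G H K : game n, cwvg R G -> cwvg R H -> cwvg R K ->
      mwc_le R G H -> mwc_le R H K -> mwc_le R G K)) /\
  (* graded with rank function rho *)
  ((forall G H : game n, is_minimal R G -> is_minimal R H -> rho G = rho H) /\
   (forall G H : game n, cwvg R G -> cwvg R H -> mwc_le R G H -> (rho G <= rho H)%N) /\
   (forall G H : game n, cwvg R G -> cwvg R H -> covers R G H -> rho H = (rho G).+1)) /\
  (* least element, of rank 0 *)
  (exists G0 : game n, cwvg R G0 /\ (forall G : game n, cwvg R G -> mwc_le R G0 G) /\
     rho G0 = 0%N).
Proof.
move=> _; split; [split; [|split]|split; [split; [|split]|]].
- by move=> G _; exact: Relation_Operators.rt1n_refl.
- move=> G H _ _ h1 h2; case: (le_rho h1) => // l1; case: (le_rho h2) => [->//|l2].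
  by move: (ltn_trans l1 l2); rewrite ltnn.
- by move=> G H K _ _ _; exact: le_trans_mwc.
- move=> G H [cG mG] [cH mH].
  by rewrite -(mG _ (G0_cwvg R n) (least cG)) -(mH _ (G0_cwvg R n) (least cH)).
- by move=> G H _ _ /le_rho [->//|/ltnW].
- move=> G H _ _ [le [neq nz]].
  case: le neq nz => [/(_ erefl) //|y z sxy yz _ nz].
  case: (le_rho yz) => [<-|lt]; first exact: step_rho sxy.
  exfalso; apply: nz; exists y; split; first by case: sxy => _ [].
  have ry := step_rho sxy.
  split; first by move=> e; move: ry; rewrite e => /n_Sn.
  split; first by move=> e; rewrite e ltnn in lt.
  split=> //; apply: (@Relation_Operators.rt1n_trans _ _ G y y) => //; exact: Relation_Operators.rt1n_refl.
exists (G0 n); split; first exact: G0_cwvg.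
by split; [move=> G; exact: least | exact: G0_rho].
Qed.
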